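(* For every integer $n\ge 0$, \[ {}_{H}w_{n+1}(x)=x\frac{d}{dx}\Big((1+x)\,{}_{H}w_{n}(x)\Big)+x\,w_{n}(x). \]
   Context: $\genfrac{\{}{\}}{0pt}{}{n}{k}$ denotes the Stirling numbers of the second kind. The geometric polynomials are $w_n(x)=\sum_{k=0}^{n}\genfrac{\{}{\}}{0pt}{}{n}{k}k!\,x^k$ (so $w_0=1$). With $H_k=\sum_{i=1}^k 1/i$, the harmonic geometric polynomials are ${}_{H}w_n(x)=\sum_{k=1}^{n}\genfrac{\{}{\}}{0pt}{}{n}{k}k!\,H_k\,x^k$ (so ${}_Hw_0=0$). *)

(* Defs.v *)
From mathcomp Require Import all_boot all_order all_algebra.
Set Implicit Arguments. Unset Strict Implicit. Unset Printing Implicit Defensive.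
Import Order.TTheory GRing.Theory Num.Theory.
Local Open Scope ring_scope.

Fixpoint stirling2 (n k : nat) : nat :=
  match n, k with
  | 0, 0 => 1
  | 0, _.+1 => 0
  | _.+1, 0 => 0
  | n'.+1, k'.+1 => k'.+1 * stirling2 n' k'.+1 + stirling2 n' k'
  end%N.

Definition harmonic (R : numFieldType) (k : nat) : R :=
  \sum_(1 <= i < k.+1) (i%:R)^-1.

Definition geom_poly (R : numFieldType) (n : nat) : {poly R} :=
  \sum_(0 <= k < n.+1) ((stirling2 n k * k`!)%:R : R) *: 'X^k.

Definition hgeom_poly (R : numFieldType) (n : nat) : {poly R} :=
  \sum_(1 <= k < n.+1) (((stirling2 n k * k`!)%:R : R) * harmonic R k) *: 'X^k.

(* Main.v *)
Require Import Defs.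
From mathcomp Require Import all_boot all_order all_algebra.
From mathcomp Require Import ring.
Import GRing.Theory Num.Theory.
Local Open Scope ring_scope.

Lemma stirling2_gt (n k : nat) : (n < k)%N -> stirling2 n k = 0%N.
Proof.
elim: n k => [|n IH] [|k] //= H.
rewrite ltnS in H; rewrite (IH k) // (IH k.+1) // ?muln0 //; exact: ltnW.
Qed.

Lemma harmonic0 (R : numFieldType) : harmonic R 0 = 0.
Proof. by rewrite /harmonic big_geq. Qed.

Lemma harmonicS (R : numFieldType) j :
  harmonic R j.+1 = harmonic R j + (j.+1%:R)^-1.
Proof. by rewrite /harmonic big_nat_recr. Qed.

Lemma coef_sum_nat (R : numFieldType) (F : nat -> R) n k :
  (forall i, (n < i)%N -> F i = 0) ->
  (\sum_(0 <= i < n.+1) F i *: 'X^i : {poly R})`_k = F k.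
Proof.
move=> HF; rewrite coef_sum.
under eq_bigr do rewrite coefZ coefXn.
case: (ltnP n k) => Hk.
  rewrite HF // big1 // => i _.
  case: eqP => [E|]; last by rewrite mulr0.
  by rewrite -E HF ?mul0r.
rewrite (bigD1_seq k) /= ?iota_uniq ?mem_iota ?add0n ?ltnS //.
rewrite big1 ?addr0; first by case: eqP => // _; rewrite mulr1.
by move=> i /negbTE Hi; rewrite eq_sym Hi mulr0.
Qed.

Lemma coef_h (R : numFieldType) n k :
  (hgeom_poly R n)`_k = (stirling2 n k * k`!)%:R * harmonic R k.
Proof.
rewrite /hgeom_poly.
have -> : \sum_(1 <= k0 < n.+1)
    (((stirling2 n k0 * k0`!)%:R : R) * harmonic R k0) *: 'X^k0 =
  \sum_(0 <= k0 < n.+1)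
    (((stirling2 n k0 * k0`!)%:R : R) * harmonic R k0) *: 'X^k0.
  by rewrite [in RHS]big_ltn // harmonic0 mulr0 scale0r add0r.
by rewrite coef_sum_nat // => i Hi; rewrite stirling2_gt // mul0n mul0r.
Qed.

Lemma coef_g (R : numFieldType) n k :
  (geom_poly R n)`_k = (stirling2 n k * k`!)%:R.
Proof.
by rewrite /geom_poly coef_sum_nat // => i Hi; rewrite stirling2_gt.
Qed.

Theorem proposition2 (R : numFieldType) (n : nat) :
  hgeom_poly R n.+1 =
    'X * ((1 + 'X) * hgeom_poly R n)^`() + 'X * geom_poly R n.
Proof.
apply/polyP => i.
rewrite coefD !coefXM coef_h.
case: i => [|j] /=; first by rewrite harmonic0 mulr0 addr0.
rewrite coef_deriv mulrDl mul1r coefD coefXM /= !coef_h coef_g harmonicS.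
rewrite /= factS !natrM !natrD !natrM -mulr_natr.
have Hm : (j.+1%:R : R) != 0 by rewrite pnatr_eq0.
set m := (j.+1%:R : R).
field.
by rewrite -natr1 addrC in Hm.
Qed.
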